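(* Let $H$ be a finite group of odd order with $d(H)\le 1$. Then $\mathsf{GEN}(\mathbb{Z}_2^2\times H)=*1$.
   Context: For a finite group $G$, $\mathsf{GEN}(G)$ is the following impartial two-player game. A position is a set of elements selected so far; the starting position is $\emptyset$. From a position $P$ with $\langle P\rangle\neq G$, the player to move selects some $g\in G\setminus P$, producing the position $P\cup\{g\}$ (these are the options of $P$); a position $P$ with $\langle P\rangle = G$ has no options. The nim-number of a position is defined recursively by $\operatorname{nim}(P)=\operatorname{mex}\{\operatorname{nim}(Q): Q \text{ an option of } P\}$, where $\operatorname{mex}(A)$ is the least nonnegative integer not in $A$. We write $\mathsf{GEN}(G)=*n$ if $\operatorname{nim}(\emptyset)=n$. $d(G)$ denotes the minimum size of a generating set of $G$ (with $d(G)=0$ for trivial $G$); $\mathbb{Z}_2^2=\mathbb{Z}_2\times\mathbb{Z}_2$. *)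

(* Defs.v *)
From HB Require Import structures.
From mathcomp Require Import all_boot all_order all_fingroup all_algebra all_solvable.
Set Implicit Arguments. Unset Strict Implicit. Unset Printing Implicit Defensive.

Local Open Scope group_scope.

(* mex s = least natural number not occurring in s (it is always <= size s). *)
Definition mex (s : seq nat) : nat :=
  find (fun n => n \notin s) (iota 0 (size s).+1).

(* Positions are sets P; if <<P>> = G there are no options, otherwise the
   options are g |: P for g \notin P.  nimf is the nim-number computed with a
   fuel parameter; nim uses fuel #|gT|.+1, which exceeds the maximal length
   of any play from any position, so it computes the true nim-number. *)
Fixpoint nimf (gT : finGroupType) (n : nat) (P : {set gT}) : nat :=
  match n with
  | 0 => 0
  | n'.+1 =>
      if <<P>> == [set: gT] then 0
      else mex [seq nimf n' (g |: P) | g <- enum (~: P)]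
  end.

Definition nim (gT : finGroupType) (P : {set gT}) : nat := nimf #|gT|.+1 P.

(* GEN(G) = *n  iff  GEN_nim G = n *)
Definition GEN_nim (gT : finGroupType) : nat := nim (set0 : {set gT}).

Lemma dgen_ex (gT : finGroupType) (G : {group gT}) :
  exists n, [exists A : {set gT}, (#|A| == n) && (<<A>> == G)].
Proof.
exists #|G|; apply/existsP; exists (G : {set gT}).
by rewrite eqxx /= genGid eqxx.
Qed.

Definition dgen (gT : finGroupType) (G : {group gT}) : nat :=
  ex_minn (dgen_ex G).

(* Main.v *)
Require Import Defs.
From HB Require Import structures.
From mathcomp Require Import all_boot all_order all_fingroup all_algebra all_solvable.
From mathcomp Require Import zify.
Set Implicit Arguments.

Local Open Scope group_scope.

Lemma find_iota (p : pred nat) N a m : a <= m < a + N ->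
  (forall i, a <= i < m -> ~~ p i) -> p m -> find p (iota a N) = (m - a)%N.
Proof.
elim: N a => [|N IH] a /andP [am mN] hi pm; first by lia.
rewrite /= ; case: (ltnP a m) => [lt|ge].
  rewrite (negbTE (hi a _)); last by rewrite leqnn lt.
  have h1 : a < m < a.+1 + N by apply/andP; split; lia.
  rewrite (IH a.+1 h1 _ pm); first by lia.
  by move=> i /andP [h2 h3]; apply: hi; rewrite h3 andbT; lia.
have -> : a = m by lia.
by rewrite pm subnn.
Qed.

Lemma mexE (s : seq nat) m : (forall i, i < m -> i \in s) -> m \notin s -> mex s = m.
Proof.
move=> hin hm.
have ms : (m <= size s)%N.
  rewrite -[m](size_iota 0); apply: uniq_leq_size; first exact: iota_uniq.
  by move=> i; rewrite mem_iota add0n => /andP [_ /hin].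
rewrite /mex (@find_iota _ _ 0 m) ?subn0 //.
by move=> i /andP [_ /hin]; rewrite negbK.
Qed.

Lemma cardC_U1 (T : finType) (g : T) (A : {set T}) : g \notin A ->
  #|~: A| = #|~: (g |: A)|.+1.
Proof.
move=> gA; have := cardsC A; have := cardsC (g |: A).
rewrite cardsU1 gA /=; lia.
Qed.

Lemma nimf_eq (gT : finGroupType) (f : {set gT} -> nat) :
  (forall P : {set gT}, <<P>> = [set: gT] -> f P = 0%N) ->
  (forall P : {set gT}, <<P>> != [set: gT] ->
     mex [seq f (g |: P) | g <- enum (~: P)] = f P) ->
  forall k (P : {set gT}), #|~: P| < k -> nimf k P = f P.
Proof.
move=> h0 hs; elim=> [|k IH] P hP //=.
case: ifP => [/eqP/h0 -> //|/negbT hn].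
rewrite -hs //; congr mex; apply/eq_in_map => g; rewrite mem_enum => gP.
apply: IH; rewrite inE in gP.
by rewrite (@cardC_U1 _ g P gP) ltnS in hP.
Qed.

Lemma expg_pair (A B : finGroupType) (y : A * B) k : y ^+ k = (y.1 ^+ k, y.2 ^+ k).
Proof. case: y => a b; elim: k => [|k IH] //; by rewrite !expgS IH. Qed.

Ltac zc v := case: v => [[[|[|?]] ?] [[|[|?]] ?]] //.
Lemma z2sq (v : 'Z_2 * 'Z_2) : v * v = 1. Proof. zc v; apply/eqP; by []. Qed.
Lemma z2clos (v a b : 'Z_2 * 'Z_2) : ((a == 1) || (a == v)) -> ((b == 1) || (b == v)) -> ((a * b == 1) || (a*b == v)).
Proof. zc v; zc a; zc b. Qed.
Lemma z2all (v w a : 'Z_2 * 'Z_2) : v != 1 -> w != 1 -> w != v -> [|| a == 1, a == v, a == w | a == v * w].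
Proof. zc v; zc w; zc a. Qed.
Lemma z2ex (v : 'Z_2 * 'Z_2) : exists a, (a != 1) && (a != v).
Proof. zc v; [exists (Zp1, Zp0) | exists (Zp1, Zp0) | exists (Zp0, Zp1)| exists (Zp1,Zp0)]; by []. Qed.
Lemma z2pow (v : 'Z_2 * 'Z_2) k : v ^+ k = if odd k then v else 1.
Proof.
elim: k => [|k IH]; first by rewrite expg0.
rewrite expgS IH /=; case: (odd k) => /=; by rewrite ?z2sq ?mulg1.
Qed.

Local Notation G3 H := ('Z_2 * 'Z_2 * H)%type.

Definition Oset (H : finGroupType) : {set G3 H} := [set y : G3 H | y.1 == 1].

Definition fval (H : finGroupType) (P : {set G3 H}) : nat :=
  if <<P>> == [set: G3 H] then 0%N
  else if P \subset Oset H then (if odd #|P| then 0%N else 1%N)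
  else (if odd #|P| then 2%N else 1%N).

Lemma F1 (H : finGroupType) (A : {set G3 H}) (v : 'Z_2 * 'Z_2) :
  (forall y, y \in A -> (y.1 == 1) || (y.1 == v)) -> <<A>> != [set: G3 H].
Proof.
move=> hA.
pose S := [set y : G3 H | (y.1 == 1) || (y.1 == v)].
have gS : group_set S.
  apply/group_setP; split; first by rewrite inE eqxx.
  move=> y z; rewrite !inE; exact: z2clos.
have sub : <<A>> \subset S.
  rewrite -(gen_set_id gS); apply: genS; apply/subsetP => y /hA; by rewrite inE.
apply/negP => /eqP eqT.
have [a /andP [a1 av]] := z2ex v.
have : ((a, 1) : G3 H) \in S by apply: (subsetP sub); rewrite eqT inE.
by rewrite inE /= (negbTE a1) (negbTE av).
Qed.

Lemma cyc (H : finGroupType) : dgen [set: H]%G <= 1 -> exists h : H, <[h]> = [set: H].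
Proof.
rewrite /dgen; case: ex_minnP => m /existsP [A /andP [/eqP cA /eqP gA]] _ hm.
move: hm; rewrite leq_eqVlt ltnS leqn0 => /orP [/eqP m1 | /eqP m0].
  have /cards1P [h Ah] : #|A| == 1%N by rewrite cA m1.
  by exists h; rewrite /cycle -Ah.
exists 1; rewrite cycle1 -gA.
have -> : A = set0 by apply: cards0_eq; rewrite cA m0.
by rewrite gen0.
Qed.

Lemma F2 (H : finGroupType) (Hodd : odd #|[set: H]|) (h : H) (hh : <[h]> = [set: H])
  (P : {set G3 H}) (x : G3 H) :
  x \in P -> x.1 != 1 -> <<P>> != [set: G3 H] -> exists2 g, g \notin P & <<g |: P>> = [set: G3 H].
Proof.
move=> xP xne nP.
have [w /andP [w1 wx]] := z2ex x.1.
pose g : G3 H := (w, h).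
pose K := <<g |: P>>.
have genK : K = [set: G3 H].
  apply/eqP; rewrite eqEsubset subsetT /=; apply/subsetP => -[a c] _.
  have gK : g \in K by apply: mem_gen; rewrite setU11.
  have xK : x \in K by apply: mem_gen; rewrite setU1r.
  pose n := #|[set: H]|.
  have hn : h ^+ n = 1 by apply: expg_cardG; rewrite inE.
  have e1 : ((1, h) : G3 H) \in K.
    have := groupX n.+1 gK; rewrite expg_pair /= z2pow.
    by rewrite expgSr hn mul1g /= Hodd.
  have e2 : forall c : H, ((1, c) : G3 H) \in K.
    move=> d; have : d \in <[h]> by rewrite hh inE.
    case/cycleP => i ->.
    by have := groupX i e1; rewrite expg_pair /= expg1n.
  have e3 : ((w, 1) : G3 H) \in K.
    have : g * ((1, h) : G3 H)^-1 \in K by rewrite groupM ?groupV.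
    by rewrite /g; change ((w * 1^-1, h * h^-1) \in K -> (w, 1) \in K); rewrite invg1 mulg1 mulgV.
  have e4 : ((x.1, 1) : G3 H) \in K.
    have : x * ((1, x.2) : G3 H)^-1 \in K by rewrite groupM ?groupV ?e2.
    by case: x {xP xne wx xK} => [x1 x2] /=;
       change ((x1 * 1^-1, x2 * x2^-1) \in K -> (x1, 1) \in K); rewrite invg1 mulg1 mulgV.
  have e5 : ((a, 1) : G3 H) \in K.
    case/or4P: (@z2all x.1 w a xne w1 wx) => /eqP ->.
    - by have := e2 1.
    - exact: e4.
    - exact: e3.
    - have : ((x.1, 1) : G3 H) * (w, 1) \in K by rewrite groupM.
      by change (((x.1 * w), 1 * 1) \in K -> (x.1 * w, 1) \in K); rewrite mulg1.
  have : ((a, 1) : G3 H) * (1, c) \in K by rewrite groupM ?e2.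
  by change (((a * 1), 1 * c) \in K -> (a, c) \in K); rewrite mulg1 mul1g.
exists g => //.
apply/negP => gP; move: genK; rewrite /K (setUidPr _) ?sub1set // => eP.
by rewrite eP eqxx in nP.
Qed.

Lemma F3 (H : finGroupType) (Hodd : odd #|[set: H]|)
  (P : {set G3 H}) (x : G3 H) :
  x \in P -> x.1 != 1 -> odd #|P| -> <<P>> != [set: G3 H] ->
  exists2 g, g \notin P & <<g |: P>> != [set: G3 H].
Proof.
move=> xP xne oP nP.
pose n := #|[set: H]|.
pose u := x ^+ n.
have ue : u = (x.1, 1).
  by rewrite /u expg_pair z2pow Hodd expg_cardG // inE.
have uK : u \in <<P>> by rewrite groupX // mem_gen.
have ou : #[u] = 2%N.
  have d2 : #[u] %| 2 by rewrite order_dvdn ue expg_pair /= z2pow /= expg1n.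
  have n1 : #[u] != 1%N by rewrite order_eq1 ue; apply: contra xne => /eqP [] ->.
  have := dvdn_leq (isT : 0 < 2) d2; have := order_gt0 u; move: n1; lia.
have ev : ~~ odd #|<<P>>|.
  have := order_dvdG uK; rewrite ou dvdn2 //.
have : ~~ (<<P>> \subset P).
  apply/negP => sP; have eP : <<P>> = P by apply/eqP; rewrite eqEsubset sP subset_gen.
  by rewrite eP oP in ev.
case/subsetPn => g gK gP; exists g => //.
have sub : <<g |: P>> \subset <<P>>.
  by rewrite gen_subG subUset sub1set gK subset_gen.
apply/negP => /eqP eT; move: sub; rewrite eT => sT.
by move: nP; rewrite eqEsubset sT subsetT.
Qed.

Lemma cardO (H : finGroupType) : #|Oset H| = #|[set: H]|.
Proof.
have -> : Oset H = [set ((1, c) : G3 H) | c in [set: H]].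
  apply/setP => -[a c]; rewrite inE /=; apply/eqP/imsetP => [-> | [d _ [-> _]] //].
  by exists c; rewrite ?inE.
by apply: card_imset => c d [].
Qed.

Lemma oddU1 (T : finType) (g : T) (A : {set T}) : g \notin A -> odd #|g |: A| = ~~ odd #|A|.
Proof. by move=> gA; rewrite cardsU1 gA. Qed.

Lemma subU1 (T : finType) (g : T) (A B : {set T}) : (g |: A \subset B) = (g \in B) && (A \subset B).
Proof. by rewrite subUset sub1set. Qed.

Lemma step (H : finGroupType) (Hodd : odd #|[set: H]|) (h : H) (hh : <[h]> = [set: H])
  (P : {set G3 H}) : <<P>> != [set: G3 H] ->
  mex [seq fval (g |: P) | g <- enum (~: P)] = fval P.
Proof.
move=> nP.
have memS : forall g, g \notin P -> fval (g |: P) \in [seq fval (g |: P) | g <- enum (~: P)].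
  by move=> g gP; apply/mapP; exists g; rewrite ?mem_enum ?inE.
have allS : forall i, i \in [seq fval (g |: P) | g <- enum (~: P)] ->
    exists2 g, g \notin P & i = fval (g |: P).
  by move=> i /mapP [g]; rewrite mem_enum inE => gP ->; exists g.
rewrite [fval P]/fval (negbTE nP).
case: (boolP (P \subset Oset H)) => PO.
  have Fn : forall g, g \notin P -> <<g |: P>> != [set: G3 H].
    move=> g gP; apply: (@F1 _ _ g.1) => y; rewrite in_setU1 => /orP [/eqP -> | yP].
      by rewrite eqxx orbT.
    by have := subsetP PO y yP; rewrite inE => ->.
  case: (boolP (odd #|P|)) => oP.
    apply: mexE => // ; apply/negP => /allS [g gP].
    by rewrite /fval (negbTE (Fn g gP)) oddU1 // oP /=; case: ifP.
  apply: mexE.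
    move=> i; rewrite ltnS leqn0 => /eqP ->.
    have : ~~ (Oset H \subset P).
      apply/negP => sO; have eO : P = Oset H by apply/eqP; rewrite eqEsubset PO sO.
      by move: oP; rewrite eO cardO Hodd.
    case/subsetPn => g gO gP.
    have e : fval (g |: P) = 0%N.
      by rewrite /fval (negbTE (Fn g gP)) subU1 gO PO oddU1 // (negbTE oP).
    by move: (memS g gP); rewrite e.
  apply/negP => /allS [g gP].
  by rewrite /fval (negbTE (Fn g gP)) oddU1 // (negbTE oP) /=; case: ifP.
case/subsetPn: (PO) => x xP; rewrite inE => xne.
have [g0 g0P g0gen] := F2 Hodd hh xP xne nP.
have v0 : 0%N \in [seq fval (g |: P) | g <- enum (~: P)].
  have e : fval (g0 |: P) = 0%N by rewrite /fval g0gen eqxx.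
  by move: (memS g0 g0P); rewrite e.
have vals : forall g, g \notin P -> fval (g |: P) = 
   if <<g |: P>> == [set: G3 H] then 0%N else (if odd #|P| then 1%N else 2%N).
  move=> g gP; rewrite /fval; case: ifP => // _.
  rewrite subU1 (negbTE PO) andbF oddU1 //; by case: (odd #|P|).
case: (boolP (odd #|P|)) => oP.
  apply: mexE.
    move=> i; rewrite ltnS leq_eqVlt ltnS leqn0 => /orP [/eqP -> | /eqP -> //].
    have [g1 g1P g1n] := F3 Hodd xP xne oP nP.
    have e : fval (g1 |: P) = 1%N by rewrite vals // (negbTE g1n) oP.
    by move: (memS g1 g1P); rewrite e.
  apply/negP => /allS [g gP]; rewrite vals // oP; by case: ifP.
apply: mexE.
  by move=> i; rewrite ltnS leqn0 => /eqP ->.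
apply/negP => /allS [g gP]; rewrite vals // (negbTE oP); by case: ifP.
Qed.

Local Close Scope group_scope.

Theorem proposition4p10 (H : finGroupType)
  (Hodd : odd #|[set: H]|) (Hd : dgen [set: H]%G <= 1) :
  GEN_nim ('Z_2 * 'Z_2 * H)%type = 1.
Proof.
have [h hh] := @cyc H Hd.
rewrite /GEN_nim /nim (@nimf_eq _ (@fval H)).
- rewrite /fval; case: ifP => [/eqP e|_].
    have : (<<(set0 : {set G3 H})>>)%g != [set: G3 H] by apply: (@F1 _ _ 1%g) => y; rewrite inE.
    by rewrite e eqxx.
  by rewrite sub0set cards0.
- by move=> P e; rewrite /fval e eqxx.
- by move=> P nP; exact: (step Hodd hh P nP).
- by rewrite ltnS max_card.
Qed.
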